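(* Let $n\ge1$, $\mathfrak g=\mathfrak{osp}(1,2n)\subset\mathfrak{gl}(1,2n)$, and $p\ge0$. Then: (1) for all homogeneous $X_1,\ldots,X_{2p+1}\in\mathfrak g$, $\mathcal P_{2p+1}(X_1,\ldots,X_{2p+1})\in\mathfrak g$; (2) for all homogeneous $X_1,\ldots,X_{4p+1}\in\mathfrak g$, $\mathcal A_{4p+1}(X_1,\ldots,X_{4p+1})\in\mathfrak g$; (3) for all homogeneous $X_1,\ldots,X_{4p+2}\in\mathfrak g$, $\mathcal A_{4p+2}(X_1,\ldots,X_{4p+2})\in\mathfrak g$.
   Context: $V=V_{\bar0}\oplus V_{\bar1}$ with $\dim V_{\bar0}=1$, $\dim V_{\bar1}=2n$, $\mathfrak{gl}(1,2n)=\mathrm{End}(V)$ with the natural grading, products being compositions. Let $\beta$ be an even nondegenerate bilinear form on $V$, symmetric on $V_{\bar0}$, symplectic on $V_{\bar1}$, $\beta(V_{\bar0},V_{\bar1})=0$; $\mathfrak{osp}(1,2n)$ is the span of homogeneous $X\in\mathrm{End}(V)$ with $\beta(XY,Z)+(-1)^{xy}\beta(Y,XZ)=0$ for all homogeneous $Y,Z$. For homogeneous $\mathcal X=(X_1,\dots,X_m)$ and $\sigma\in\mathfrak S_m$, $\epsilon(\sigma)$ is the sign and $\epsilon(\sigma,\mathcal X)=(-1)^K$ with $K$ the number of pairs $i<j$ with $\sigma(i)>\sigma(j)$ and $X_{\sigma(i)},X_{\sigma(j)}$ both odd. $\mathcal P_m(X_1,\dots,X_m)=\sum_{\sigma\in\mathfrak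 S_m}\epsilon(\sigma,\mathcal X)X_{\sigma(1)}\cdots X_{\sigma(m)}$ and $\mathcal A_m(X_1,\dots,X_m)=\sum_\sigma\epsilon(\sigma)\epsilon(\sigma,\mathcal X)X_{\sigma(1)}\cdots X_{\sigma(m)}$. *)

(* Defs.v *)
(* V = F^(1|2n) realised as column vectors indexed by 'I_(2n+1);
   index 0 spans V_0 (even), indices 1..2n span V_1 (odd). *)
From mathcomp Require Import all_boot all_order fingroup perm all_algebra.
Set Implicit Arguments. Unset Strict Implicit. Unset Printing Implicit Defensive.
Import GRing.Theory.
Local Open Scope ring_scope.

Section Super.
Variables (F : fieldType) (n : nat).
Local Notation N := (n.*2).+1.

Definition idx_par (i : 'I_N) : bool := (i != 0 :> nat).

Definition homog_vec (c : bool) (u : 'cV[F]_N) : Prop :=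
  forall i, idx_par i != c -> u i 0 = 0.

Definition homog_mx (b : bool) (A : 'M[F]_N) : Prop :=
  forall i j, (idx_par i (+) idx_par j) != b -> A i j = 0.

Definition beta (B : 'M[F]_N) (u v : 'cV[F]_N) : F := (u^T *m B *m v) 0 0.

Definition osp_form (B : 'M[F]_N) : Prop :=
  [/\ B \in unitmx,
      (forall i j, idx_par i != idx_par j -> B i j = 0),
      (forall i j, ~~ idx_par i -> ~~ idx_par j -> B j i = B i j),
      (forall i j, idx_par i -> idx_par j -> B j i = - B i j) &
      (forall i, idx_par i -> B i i = 0)].

Definition osp_cond (B : 'M[F]_N) (b : bool) (X : 'M[F]_N) : Prop :=
  forall (c c' : bool) (u v : 'cV[F]_N), homog_vec c u -> homog_vec c' v ->
    beta B (X *m u) v + (-1) ^+ (b && c) * beta B u (X *m v) = 0.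

(* osp(1,2n): the span of the homogeneous X satisfying the condition;
   since each parity-component is a subspace, the span is their sum *)
Definition in_osp (B : 'M[F]_N) (X : 'M[F]_N) : Prop :=
  exists X0 X1, [/\ X = X0 + X1,
    homog_mx false X0, osp_cond B false X0,
    homog_mx true X1 & osp_cond B true X1].

Definition inv_odd m (d : 'I_m -> bool) (s : 'S_m) : nat :=
  #|[set ij : 'I_m * 'I_m | [&& (ij.1 < ij.2)%N, (s ij.2 < s ij.1)%N,
                               d (s ij.1) & d (s ij.2)]]|.

Definition eps_sX m (d : 'I_m -> bool) (s : 'S_m) : F := (-1) ^+ inv_odd d s.

(* P_m and A_m; d i is the parity of X i *)
Definition Pm m (d : 'I_m -> bool) (X : 'I_m -> 'M[F]_N) : 'M[F]_N :=
  \sum_(s : 'S_m) eps_sX d s *: \prod_(i < m) X (s i).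

Definition Am m (d : 'I_m -> bool) (X : 'I_m -> 'M[F]_N) : 'M[F]_N :=
  \sum_(s : 'S_m) ((-1) ^+ (odd_perm s) * eps_sX d s) *: \prod_(i < m) X (s i).

Definition homog_osp_family B m (d : 'I_m -> bool) (X : 'I_m -> 'M[F]_N) : Prop :=
  forall i, homog_mx (d i) (X i) /\ in_osp B (X i).

End Super.

(* Main.v *)
Require Import Defs.
From mathcomp Require Import all_boot all_order fingroup perm all_algebra zify.
Import GRing.Theory.
Local Open Scope ring_scope.
Set Implicit Arguments. Unset Strict Implicit.

Definition Tk m (y : 'I_m -> bool) : nat :=
  (\sum_(i < m) \sum_(j < m) ((i < j)%N && y i && y j : nat))%N.

Definition revp m : 'S_m := perm (@rev_ord_inj m).

Lemma card_pairs m (P : 'I_m * 'I_m -> bool) :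
  #|[set ij : 'I_m * 'I_m | P ij]| = (\sum_i \sum_j (P (i, j) : nat))%N.
Proof.
rewrite -sum1dep_card big_mkcond /= pair_big /=.
by apply: eq_bigr => -[i j] _ /=; case: (P (i, j)).
Qed.

Lemma inv_odd_rev m (d : 'I_m -> bool) (s : 'S_m) :
  (inv_odd d s + inv_odd d (revp m * s)%g)%N = Tk (fun i => d (s i)).
Proof.
rewrite /inv_odd !card_pairs /Tk.
rewrite [X in (_ + X)%N](reindex_inj rev_ord_inj) /=.
rewrite [X in (_ + X)%N](eq_bigr (fun i : 'I_m => \sum_(j < m) ((j < i)%N && (s j < s i)%N && d (s i) && d (s j) : nat))%N); last first.
  move=> i _; rewrite (reindex_inj rev_ord_inj) /=; apply: eq_bigr => j _.
  rewrite !permM !permE !rev_ordK.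
  have -> : (rev_ord i < rev_ord j)%N = (j < i)%N.
    move: (ltn_ord i) (ltn_ord j) => hi hj /=; apply/idP/idP => /ltP H; apply/ltP; lia.
  by rewrite !andbA.
rewrite [X in (_ + X)%N]exchange_big /= -big_split /=.
apply: eq_bigr => i _; rewrite -big_split /=; apply: eq_bigr => j _.
case: (ltngtP i j) => hij //=.
- case: (ltngtP (s j) (s i)) => hs //=.
  + by case: (d (s i)); case: (d (s j)).
  + by case: (d (s i)); case: (d (s j)).
  + by move/val_inj/perm_inj: hs => hs; move: hij; rewrite hs ltnn.
Qed.

Lemma Tk_rec m (y : 'I_m.+1 -> bool) :
  Tk y = (y ord0 * \sum_(j < m) y (lift ord0 j) + Tk (fun i => y (lift ord0 i)))%N.
Proof.
rewrite /Tk big_ord_recl big_ord_recl /= big_distrr /=; congr (_ + _)%N.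
  by rewrite add0n; apply: eq_bigr => j _; case: (y ord0); case: (y _).
apply: eq_bigr => i _; rewrite big_ord_recl /= add0n.
by apply: eq_bigr => j _; rewrite /bump /= ltnS.
Qed.

Lemma odd_revp m : odd_perm (revp m) = odd 'C(m, 2).
Proof.
elim: m => [|m IH].
  have -> : revp 0 = 1%g by apply/permP => -[].
  by rewrite odd_perm1.
have -> : revp m.+1 = lift_perm ord0 ord_max (revp m).
  apply/permP => i; case: (unliftP ord0 i) => [j ->|->].
    rewrite lift_perm_lift !permE; apply: val_inj => /=.
    rewrite /bump /=; move: (ltn_ord j) => hj; lia.
  by rewrite lift_perm_id permE; apply: val_inj => /=; rewrite subn1.
rewrite odd_lift_perm IH binS bin1 oddD /=.
by case: (odd m); case: (odd 'C(m, 2)).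
Qed.

Section M.
Variables (F : fieldType) (n : nat).
Local Notation N := (n.*2).+1.
Implicit Types (A M X Y : 'M[F]_N).

Definition sg (i : 'I_N) : F := (-1) ^+ idx_par i.
Definition J : 'M[F]_N := diag_mx (\row_i sg i).


Lemma JmulE k (M : 'M[F]_(N, k)) i j : (J *m M) i j = sg i * M i j.
Proof. by rewrite mul_diag_mx !mxE. Qed.
Lemma mulJE M i j : (M *m J) i j = M i j * sg j.
Proof. by rewrite mul_mx_diag !mxE. Qed.

Lemma sg2 i : sg i * sg i = 1.
Proof. by rewrite /sg; case: (idx_par i); rewrite ?expr0 ?expr1 ?mulrNN mulr1. Qed.

Lemma JJ : J *m J = 1%:M.
Proof. by apply/matrixP => i j; rewrite JmulE !mxE; case: eqP => [->|]; rewrite ?sg2 ?mulr0 ?mulr1n ?mulr0n. Qed.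

Lemma homog0 b : homog_mx b (0 : 'M[F]_N).
Proof. by move=> i j _; rewrite mxE. Qed.
Lemma homogD b A M : homog_mx b A -> homog_mx b M -> homog_mx b (A + M).
Proof. by move=> hA hM i j h; rewrite mxE hA // hM // addr0. Qed.
Lemma homogN b A : homog_mx b A -> homog_mx b (- A).
Proof. by move=> hA i j h; rewrite mxE hA // oppr0. Qed.
Lemma homogZ b (a : F) A : homog_mx b A -> homog_mx b (a *: A).
Proof. by move=> hA i j h; rewrite mxE hA // mulr0. Qed.
Lemma homog_sum b I (r : seq I) (P : pred I) (G : I -> 'M[F]_N) :
  (forall i, homog_mx b (G i)) -> homog_mx b (\sum_(i <- r | P i) G i).
Proof. by move=> hG; apply: (big_ind (homog_mx b)) => //; [apply: homog0 | apply: homogD]. Qed.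
Lemma homog_tr b A : homog_mx b A -> homog_mx b A^T.
Proof. by move=> hA i j h; rewrite mxE hA // addbC. Qed.
Lemma homog1 : homog_mx false (1%:M : 'M[F]_N).
Proof. move=> i j h; rewrite mxE; case: (eqVneq i j) h => [->|ne _]; first by rewrite addbb. by []. Qed.
Lemma homog_mul a b A M : homog_mx a A -> homog_mx b M -> homog_mx (a (+) b) (A *m M).
Proof.
move=> hA hM i j h; rewrite mxE big1 // => k _.
case: (eqVneq (idx_par i (+) idx_par k) a) => [e|e]; last by rewrite hA // mul0r.
rewrite hM ?mulr0 //; apply: contra h => /eqP H; rewrite -e -H.
by case: (idx_par i); case: (idx_par k); case: (idx_par j).
Qed.
Lemma homog_uniq b A : homog_mx b A -> homog_mx (~~ b) A -> A = 0.
Proof.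
move=> h1 h2; apply/matrixP => i j; rewrite mxE.
case: (eqVneq (idx_par i (+) idx_par j) b) => e; last by rewrite h1.
by rewrite h2 // e; case: b {h1 h2 e}.
Qed.

Lemma commJ c M : homog_mx c M -> M *m J = (-1) ^+ c *: (J *m M).
Proof.
move=> hM; apply/matrixP => i j; rewrite mulJE mxE JmulE.
case: (eqVneq (idx_par i (+) idx_par j) c) => e; last by rewrite hM // !(mulr0, mul0r).
rewrite -e /sg; case: (idx_par i); case: (idx_par j);
  by rewrite /= ?expr0 ?expr1 ?mulrN ?mulNr ?mulr1 ?mul1r ?opprK.
Qed.

Definition Jp (k : nat) : 'M[F]_N := if odd k then J else 1%:M.

Lemma Jp_add a b : Jp (a + b) = Jp a *m Jp b.
Proof. by rewrite /Jp oddD; case: (odd a); case: (odd b); rewrite /= ?JJ ?mul1mx ?mulmx1. Qed.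

Lemma commJk c M k : homog_mx c M -> M *m Jp k = (-1) ^+ (c * k) *: (Jp k *m M).
Proof.
move=> hM; rewrite -signr_odd oddM /Jp; case: (odd k); rewrite ?andbT ?andbF.
  by rewrite signr_odd (commJ hM).
by rewrite mulmx1 mul1mx expr0 scale1r.
Qed.
Definition MC (B : 'M[F]_N) (b : bool) X := X^T *m B = - (Jp b *m B *m X).

Lemma JpmulE k c (M : 'M[F]_(N, c)) i j : (Jp k *m M) i j = (-1) ^+ (odd k && idx_par i) * M i j.
Proof. by rewrite /Jp; case: (odd k); rewrite ?JmulE // mul1mx expr0 mul1r. Qed.

Lemma Jp_tr k : (Jp k)^T = Jp k.
Proof. by rewrite /Jp; case: (odd k); rewrite ?trmx1 // /J tr_diag_mx. Qed.

Lemma Jvec c (b : bool) (u : 'cV[F]_N) : homog_vec c u -> Jp b *m u = (-1) ^+ (b && c) *: u.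
Proof.
move=> hu; apply/matrixP => i j; rewrite (ord1 j) JpmulE mxE oddb.
case: (eqVneq (idx_par i) c) => [<-|ne]; first by [].
by rewrite hu // !mulr0.
Qed.

Lemma bil_delta (M : 'M[F]_N) i j : ((delta_mx i (0 : 'I_1) : 'cV[F]_N)^T *m M *m (delta_mx j (0 : 'I_1) : 'cV[F]_N)) 0 0 = M i j.
Proof. by rewrite trmx_delta -rowE -colE !mxE. Qed.

Lemma delta_homog i : homog_vec (idx_par i) (delta_mx i 0 : 'cV[F]_N).
Proof. by move=> k hk; rewrite mxE; case: (eqVneq k i) hk => [->|]; rewrite ?eqxx // andFb. Qed.

Lemma MC_osp B b X : MC B b X -> osp_cond B b X.
Proof.
move=> hX c c' u v hu hv; rewrite /beta trmx_mul !mulmxA.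
rewrite -(mulmxA u^T X^T B) hX mulmxN mulNmx mxE !mulmxA.
rewrite -[u^T *m Jp b]trmxK trmx_mul trmxK Jp_tr (Jvec b hu).
rewrite linearZ /= -!scalemxAl mxE.
by rewrite addrC subrr.
Qed.

Lemma osp_MC B b X : osp_cond B b X -> MC B b X.
Proof.
move=> hX; apply/matrixP => i j.
have := hX _ _ _ _ (delta_homog (i:=i)) (delta_homog (i:=j)).
rewrite /beta trmx_mul !mulmxA -(mulmxA _ X^T B) bil_delta -(mulmxA _ B X) bil_delta.
move/eqP; rewrite addr_eq0 => /eqP ->.
by rewrite [RHS]mxE -mulmxA JpmulE oddb.
Qed.

Lemma in_osp_homog B b X : homog_mx b X -> in_osp B X -> osp_cond B b X.
Proof.
move=> hX [X0 [X1 [eX h0 c0 h1 c1]]]; rewrite eX in hX *; case: b hX => hX.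
  have e : X0 = 0.
    apply: (homog_uniq (b:=true)) => //.
    have -> : X0 = (X0 + X1) - X1 by rewrite addrK.
    exact: (homogD hX (homogN h1)).
  by rewrite e add0r.
have e : X1 = 0.
  apply: (homog_uniq (b:=false)) => //.
  have -> : X1 = (X0 + X1) - X0 by rewrite [X0 + X1]addrC addrK.
  exact: (homogD hX (homogN h0)).
by rewrite e addr0.
Qed.

Lemma sign_oddM (S : nat) (b : bool) : (-1) ^+ (odd S * b) = (-1) ^+ (b * S) :> F.
Proof. by rewrite -[LHS]signr_odd -[RHS]signr_odd !oddM oddb andbC. Qed.

Lemma koszul B m (y : 'I_m -> bool) (Y : 'I_m -> 'M[F]_N) :
  (forall i, homog_mx (y i) (Y i) /\ MC B (y i) (Y i)) ->
  homog_mx (odd (\sum_i (y i : nat))) (\prod_(i < m) Y i) /\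
  (\prod_(i < m) Y i)^T *m B =
    ((-1) ^+ m * (-1) ^+ Tk y) *: (Jp (\sum_i (y i : nat)) *m B *m \prod_(i < m) Y (rev_ord i)).
Proof.
elim: m y Y => [|m IH] y Y hY.
  rewrite !big_ord0 /Tk big_ord0 expr0 mulr1 scale1r; split; first exact: homog1.
  have e1 : (1 : 'M[F]_N) = 1%:M by [].
  by rewrite /Jp /= e1 trmx1 !mul1mx mulmx1.
have [hW cW] := IH (fun i => y (lift ord0 i)) (fun i => Y (lift ord0 i)) (fun i => hY _).
have [h0 c0] := hY ord0.
have eS : (\sum_(i < m.+1) (y i : nat))%N = (y ord0 + \sum_(i < m) y (lift ord0 i))%N.
  by rewrite big_ord_recl.
have eP : \prod_(i < m.+1) Y i = Y ord0 * \prod_(i < m) Y (lift ord0 i) by rewrite big_ord_recl.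
have eR : \prod_(i < m.+1) Y (rev_ord i) = (\prod_(i < m) Y (lift ord0 (rev_ord i))) * Y ord0.
  rewrite big_ord_recr /=; congr (_ * _).
    apply: eq_bigr => i _; congr Y; apply: val_inj => /=.
    rewrite /bump /=; move: (ltn_ord i) => hi; lia.
  by congr Y; apply: val_inj => /=; rewrite subnn.
rewrite eS eP eR Tk_rec; split.
  by rewrite oddD oddb; apply: (homog_mul h0 hW).
set W := \prod_(i < m) Y (lift ord0 i) in hW cW *.
set Wr := \prod_(i < m) Y (lift ord0 (rev_ord i)) in cW *.
set S := (\sum_(i < m) y (lift ord0 i))%N in hW cW *.
set T := Tk _ in cW *.
have -> : Y ord0 * W = Y ord0 *m W by [].
have -> : Wr * Y ord0 = Wr *m Y ord0 by [].
rewrite trmx_mul -(mulmxA W^T) c0 mulmxN !mulmxA (commJk _ (homog_tr hW)).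
rewrite -!scalemxAl -(mulmxA (Jp _) W^T B) cW -!scalemxAr -!scalemxAl !mulmxA -Jp_add.
rewrite scalerA -scaleNr; congr (_ *: _).
by rewrite sign_oddM exprS exprD mulN1r mulNr mulrCA.
Qed.

Lemma MC0 B b : MC B b (0 : 'M[F]_N).
Proof. by rewrite /MC trmx0 mul0mx mulmx0 oppr0. Qed.

Lemma main_gen B m (d : 'I_m -> bool) (X : 'I_m -> 'M[F]_N) (a : {perm 'I_m} -> F) :
  homog_osp_family B d X ->
  (forall s, a s * ((-1) ^+ m * (-1) ^+ Tk (fun i => d (s i))) = - a (revp m * s)%g) ->
  in_osp B (\sum_(s : 'S_m) a s *: \prod_(i < m) X (s i)).
Proof.
move=> hX ha.
have hX' : forall i, homog_mx (d i) (X i) /\ MC B (d i) (X i).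
  move=> i; have [h1 h2] := hX i; split => //; apply: osp_MC; exact: in_osp_homog.
set w := (\sum_i (d i : nat))%N.
have ew : forall s : 'S_m, (\sum_i (d (s i) : nat))%N = w.
  by move=> s; rewrite /w [RHS](reindex_inj (@perm_inj _ s)).
have K : forall s : 'S_m, homog_mx (odd w) (\prod_(i < m) X (s i)) /\
    (\prod_(i < m) X (s i))^T *m B =
    ((-1) ^+ m * (-1) ^+ Tk (fun i => d (s i))) *: (Jp w *m B *m \prod_(i < m) X ((revp m * s)%g i)).
  move=> s; have [k1 k2] := koszul (y := fun i => d (s i)) (Y := fun i => X (s i)) (fun i => hX' (s i)).
  rewrite ew in k1 k2; split => //; rewrite k2; congr (_ *: (_ *m _)).
  by apply: eq_bigr => i _; rewrite permM permE.
set P := \sum_(s : 'S_m) _.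
have hP : homog_mx (odd w) P by apply: homog_sum => s; apply: homogZ; case: (K s).
have cP : MC B (odd w) P.
  rewrite /MC /Jp oddb -/(Jp w) /P linear_sum mulmx_suml mulmx_sumr -sumrN.
  rewrite [in RHS](reindex_inj (mulgI (revp m))) /=.
  apply: eq_bigr => s _.
  by rewrite linearZ /= -scalemxAl (proj2 (K s)) scalerA ha -scalemxAr scaleNr.
case hw : (odd w) in hP cP.
  exists 0, P; split; rewrite ?add0r //; [exact: homog0 | apply: MC_osp; exact: MC0 | exact: MC_osp].
exists P, 0; split; rewrite ?addr0 //; [exact: MC_osp | exact: homog0 | apply: MC_osp; exact: MC0].
Qed.
End M.

Lemma sign_double (F : fieldType) k : (-1) ^+ (k.*2) = 1 :> F.
Proof. by rewrite -signr_odd odd_double expr0. Qed.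

Lemma sign_sq (F : fieldType) k : (-1) ^+ k * (-1) ^+ k = 1 :> F.
Proof. by rewrite -exprD addnn sign_double. Qed.

Lemma bin_4p1 p : odd 'C((4 * p).+1, 2) = false.
Proof.
rewrite bin2 /= (_ : (4 * p).+1 * (4 * p) = ((4 * p).+1 * (2 * p)).*2)%N; last by rewrite -mul2n; lia.
by rewrite doubleK oddM mulnC oddM /= andbF.
Qed.

Lemma bin_4p2 p : odd 'C((4 * p).+2, 2) = true.
Proof.
rewrite bin2; set q := (_ * _)%N.
have -> : q = ((2 * p).+1 * (4 * p).+1).*2 by rewrite /q -mul2n /=; lia.
by rewrite doubleK oddM /= !oddM /=.
Qed.

Lemma alg_aux (F : fieldType) (o u v : F) : u * u = 1 -> o * u * (u * v) = o * v.
Proof. by move=> h; rewrite -mulrA (mulrA u u v) h mul1r. Qed.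

Lemma e4 p : (4 * p = (2 * p).*2)%N.
Proof. by rewrite -mul2n mulnA. Qed.

Lemma m1 (F : fieldType) p : (-1) ^+ (4 * p).+1 = -1 :> F.
Proof. by rewrite exprS e4 sign_double mulr1. Qed.
Lemma m2 (F : fieldType) p : (-1) ^+ (4 * p).+2 = 1 :> F.
Proof. by rewrite exprS m1 mulrNN mulr1. Qed.

Theorem lemma5p1 (F : fieldType) (hF : [pchar F] =i pred0) (n : nat) (hn : (0 < n)%N)
  (B : 'M[F]_((n.*2).+1)) (hB : osp_form B) (p : nat) :
  [/\ (forall (d : 'I_((p.*2).+1) -> bool) (X : 'I_((p.*2).+1) -> 'M[F]_((n.*2).+1)),
         homog_osp_family B d X -> in_osp B (Pm d X)),
      (forall (d : 'I_((4 * p).+1) -> bool) (X : 'I_((4 * p).+1) -> 'M[F]_((n.*2).+1)),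
         homog_osp_family B d X -> in_osp B (Am d X)) &
      (forall (d : 'I_((4 * p).+2) -> bool) (X : 'I_((4 * p).+2) -> 'M[F]_((n.*2).+1)),
         homog_osp_family B d X -> in_osp B (Am d X))].
Proof.
split.
- move=> d X hX; rewrite /Pm; apply: main_gen => // s.
  rewrite -inv_odd_rev /eps_sX exprD exprS sign_double mulr1.
  by rewrite mulN1r mulrN mulrA sign_sq mul1r.
- move=> d X hX; rewrite /Am; apply: main_gen => // s.
  rewrite -inv_odd_rev /eps_sX exprD odd_permM signr_addb odd_revp bin_4p1.
  rewrite m1 expr0 mul1r mulN1r mulrN alg_aux //.
  exact: sign_sq.
- move=> d X hX; rewrite /Am; apply: main_gen => // s.
  rewrite -inv_odd_rev /eps_sX exprD odd_permM signr_addb odd_revp bin_4p2.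
  rewrite m2 mul1r expr1 mulN1r mulNr opprK alg_aux //.
  exact: sign_sq.
Qed.
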